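(* Let $\mathcal{F}=\langle\mathbb{A},(\mu_i)_{i\in\mathsf{Ag}}\rangle$ be an APE-structure and $\mathbb{E}=(E,(\sim_i),(P_i),\Phi,\mathsf{pre})$ a probabilistic event structure over $\mathbb{A}$. Then the intermediate structure $\prod_{\mathbb{E}}\mathcal{F}=\langle\prod_{\mathbb{E}}\mathbb{A},(\mu'_i)_{i\in\mathsf{Ag}}\rangle$ is an ApPE-structure. Furthermore, if $y\in\prod_{\mathbb{E}}\mathbb{A}$ satisfies $\bigvee_{a\in\Phi}a\leq y(e)$ for every $e\in E$, then $\mu'_i(x)=\mu'_i(x\wedge y)$ for every $x$ in the domain of $\mu'_i$.
   Context: Fix a set $\mathsf{Ag}$ of agents. A monadic Heyting algebra is a Heyting algebra $\mathbb{L}$ with, for each $i\in\mathsf{Ag}$, monotone unary operations $\lozenge_i,\Box_i$ such that for all $a,b$: $a\leq\lozenge_i a$; $\Box_i a\leq a$; $\lozenge_i(a\vee b)\leq\lozenge_i a\vee\lozenge_i b$; $\Box_i(a\to b)\leq\Box_i a\to\Box_i b$; $\lozenge_i a\leq\Box_i\lozenge_i a$; $\lozenge_i\Box_i a\leq\Box_i a$; $\Box_i(a\to b)\leq\lozenge_i a\to\lozenge_i b$; $\lozenge_i\bot\leq\bot$; $\top\leq\Box_i\top$. An epistemic Heyting algebra is a finite monadic Heyting algebra with $\lozenge_i a\vee\neg\lozenge_i a=\top$ for all $i,a$. An element $a$ is $i$-minimal if $a\neq\bot$, $\lozenge_i a=a$, and whenever $b<a$ and $\lozenge_i b=b$ then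 $b=\bot$; $\mathsf{Min}_i(\mathbb{A})$ is the set of $i$-minimal elements. A partial map $\mu:\mathbb{A}\to\mathbb{R}^+$ is an $i$-premeasure if: (1) $\mathsf{dom}(\mu)=\mathsf{Min}_i(\mathbb{A}){\downarrow}$; (2) $\mu$ is order-preserving; (3) for every $a\in\mathsf{Min}_i(\mathbb{A})$ and $b,c\leq a$, $\mu(b\vee c)=\mu(b)+\mu(c)-\mu(b\wedge c)$; (4) $\mu(\bot)=0$ if $\mathsf{dom}(\mu)\neq\varnothing$. It is an $i$-measure if also (5) for $a\in\mathsf{Min}_i(\mathbb{A})$ and $b<c\leq a$, $\mu(b)<\mu(c)$; (6) $\mu(a)=1$ for $a\in\mathsf{Min}_i(\mathbb{A})$. An ApPE-structure (resp. APE-structure) is $\langle\mathbb{A},(\mu_i)_{i\in\mathsf{Ag}}\rangle$ with $\mathbb{A}$ an epistemic Heyting algebra and each $\mu_i$ an $i$-premeasure (resp. $i$-measure). A pre-ordered multiset on $X$ is a multiset in which the copies $x_1,\dots,x_n$ of an element carry the linear order $x_1\prec\cdots\prec x_n$. A probabilistic event structure over $\mathbb{A}$ is $(E,(\sim_i),(P_i),\Phi,\mathsf{pre})$: $E$ non-empty finite; $\sim_i$ equivalence relations on $E$; $P_i:E\to\,]0,1]$ with $\sum\{P_i(e')\mid e'\sim_i e\}=1$; $\Phi$ a finite pre-ordered multiset on $\mathbb{A}$ such that any $a,b\in\Phi$ arising from distinct elements satisfy $a\wedge b=\bot$ or $a<b$ or $b<a$; $\mathsf{pre}(\bullet\mid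 a)$ a probability distribution on $E$ for each $a\in\Phi$; and if $\mathsf{pre}(e\mid a)=0$ then $\mathsf{pre}(e\mid b)=0$ for $b\in\Phi$ with $a<b$ (distinct elements) or $a\prec b$ (copies). For $a\in\Phi$, $\mathrm{mb}(a)$ is the set of maximal elements of $\Phi\cap({\downarrow}a\setminus\{a\})$, and $\mu^a_i(x):=\mu_i(x\wedge a)-\sum_{b\in\mathrm{mb}(a)}\mu_i(x\wedge b)$ for $x\in\mathsf{Min}_i(\mathbb{A}){\downarrow}$. The intermediate algebra $\prod_{\mathbb{E}}\mathbb{A}$ has as carrier all maps $f:E\to\mathbb{A}$, pointwise Heyting operations, $(\lozenge'_i f)(e)=\bigvee\{\lozenge_i f(e')\mid e'\sim_i e\}$ and $(\Box'_i f)(e)=\bigwedge\{\Box_i f(e')\mid e'\sim_i e\}$. The intermediate structure $\prod_{\mathbb{E}}\mathcal{F}$ equips it with $\mu'_i:\mathsf{Min}_i(\prod_{\mathbb{E}}\mathbb{A}){\downarrow}\to\mathbb{R}^+$, $\mu'_i(f)=\sum_{e\in E}\sum_{a\in\Phi}P_i(e)\cdot\mu^a_i(f(e))\cdot\mathsf{pre}(e\mid a)$ ($i$-minimality in $\prod_{\mathbb{E}}\mathbb{A}$ taken w.r.t. $\lozenge'_i$). *)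

(* Defs.v *)
From HB Require Import structures.
From mathcomp Require Import all_boot all_order all_algebra.
From mathcomp Require Import reals.

Set Implicit Arguments.
Unset Strict Implicit.
Unset Printing Implicit Defensive.

Import Order.TTheory GRing.Theory Num.Theory.
Local Open Scope ring_scope.

(* Raw signature of a Heyting algebra with agent-indexed modalities.
   The order is a boolean relation; the algebraic content is in the
   predicates below. *)
Record HAops (Ag : Type) (T : Type) := MkHAops {
  hle   : T -> T -> bool;
  hmeet : T -> T -> T;
  hjoin : T -> T -> T;
  himp  : T -> T -> T;
  hbot  : T;
  htop  : T;
  hdia  : Ag -> T -> T;
  hbox  : Ag -> T -> T }.

Section Algebra.
Variables (Ag : Type) (T : finType) (A : HAops Ag T).

Local Notation le := (hle A).
Local Notation meet := (hmeet A).
Local Notation join := (hjoin A).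
Local Notation imp := (himp A).
Local Notation bot := (hbot A).
Local Notation top := (htop A).
Local Notation dia := (hdia A).
Local Notation box := (hbox A).

Definition hlt (a b : T) : bool := le a b && (a != b).

Definition hneg (a : T) : T := imp a bot.

Definition is_heyting : Prop :=
  (forall a, le a a) /\
  (forall a b, le a b -> le b a -> a = b) /\
  (forall a b c, le a b -> le b c -> le a c) /\
  (forall a b, le (meet a b) a /\ le (meet a b) b) /\
  (forall a b c, le c a -> le c b -> le c (meet a b)) /\
  (forall a b, le a (join a b) /\ le b (join a b)) /\
  (forall a b c, le a c -> le b c -> le (join a b) c) /\
  (forall a, le bot a /\ le a top) /\
  (forall a b c, le (meet c a) b <-> le c (imp a b)).

Definition is_monadic : Prop :=
  is_heyting /\
  forall i : Ag,
  (forall a b, le a b -> le (dia i a) (dia i b)) /\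
  (forall a b, le a b -> le (box i a) (box i b)) /\
  (forall a, le a (dia i a)) /\
  (forall a, le (box i a) a) /\
  (forall a b, le (dia i (join a b)) (join (dia i a) (dia i b))) /\
  (forall a b, le (box i (imp a b)) (imp (box i a) (box i b))) /\
  (forall a, le (dia i a) (box i (dia i a))) /\
  (forall a, le (dia i (box i a)) (box i a)) /\
  (forall a b, le (box i (imp a b)) (imp (dia i a) (dia i b))) /\
  le (dia i bot) bot /\
  le top (box i top).

(* epistemic Heyting algebra (finiteness: T is a finType) *)
Definition is_epistemic : Prop :=
  is_monadic /\ forall i a, join (dia i a) (hneg (dia i a)) = top.

Definition iminimal (i : Ag) (a : T) : Prop :=
  [/\ a <> bot, dia i a = a &
      forall b, hlt b a -> dia i b = b -> b = bot].

Definition in_dom (i : Ag) (x : T) : Prop :=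
  exists a, iminimal i a /\ le x a.

Variable R : realType.

(* A partial map with domain Min_i(A)↓ is represented by a total map
   mu : T -> R of which only the values on in_dom i matter. *)
Definition is_premeasure (i : Ag) (mu : T -> R) : Prop :=
  [/\ (forall x, in_dom i x -> 0 <= mu x),
      (forall x y, in_dom i x -> in_dom i y -> le x y -> mu x <= mu y),
      (forall a b c, iminimal i a -> le b a -> le c a ->
         mu (join b c) = mu b + mu c - mu (meet b c)) &
      ((exists x, in_dom i x) -> mu bot = 0)].

Definition is_measure (i : Ag) (mu : T -> R) : Prop :=
  [/\ is_premeasure i mu,
      (forall a b c, iminimal i a -> hlt b c -> le c a -> mu b < mu c) &
      (forall a, iminimal i a -> mu a = 1)].

Definition is_ApPE (mu : Ag -> T -> R) : Prop :=
  is_epistemic /\ forall i, is_premeasure i (mu i).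

Definition is_APE (mu : Ag -> T -> R) : Prop :=
  is_epistemic /\ forall i, is_measure i (mu i).

End Algebra.

Section EventStructure.
Variables (Ag : Type) (T : finType) (A : HAops Ag T) (R : realType).
Variables (E : finType) (sim : Ag -> rel E) (P : Ag -> E -> R).
(* Phi: finite pre-ordered multiset on A, given as a list; the copies of
   an element are linearly ordered by their position in the list. *)
Variables (Phi : seq T) (pre : 'I_(size Phi) -> E -> R).

Local Notation le := (hle A).
Local Notation lt := (hlt A).
Local Notation meet := (hmeet A).

Definition phi (k : 'I_(size Phi)) : T := nth (hbot A) Phi k.

Definition is_prob_event_structure : Prop :=
  (0 < #|E|)%N/\
      (forall i, [/\ reflexive (sim i), symmetric (sim i) & transitive (sim i)])/\
      (forall i e, 0 < P i e <= 1)/\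
      (forall i e, \sum_(e' : E | sim i e' e) P i e' = 1)/\
      (forall k l : 'I_(size Phi), phi k != phi l ->
         [\/ meet (phi k) (phi l) = hbot A, lt (phi k) (phi l) | lt (phi l) (phi k)])/\
      (forall k e, 0 <= pre k e)/\
      (forall k, \sum_(e : E) pre k e = 1) /\
      (forall (k l : 'I_(size Phi)) e, pre k e = 0 ->
         (lt (phi k) (phi l) || ((phi k == phi l) && (k < l)%N)) ->
         pre l e = 0).

Definition maxbelow (b a : T) : bool :=
  lt b a && ~~ has (fun c => lt b c && lt c a) Phi.

Definition mu_loc (mu : T -> R) (a x : T) : R :=
  mu (meet x a) - \sum_(b <- undup Phi | maxbelow b a) mu (meet x b).

Definition prod_ops : HAops Ag {ffun E -> T} :=
  {| hle := fun f g : {ffun E -> T} => [forall e, hle A (f e) (g e)];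
     hmeet := fun f g : {ffun E -> T} => [ffun e => hmeet A (f e) (g e)];
     hjoin := fun f g : {ffun E -> T} => [ffun e => hjoin A (f e) (g e)];
     himp := fun f g : {ffun E -> T} => [ffun e => himp A (f e) (g e)];
     hbot := [ffun _ => hbot A];
     htop := [ffun _ => htop A];
     hdia := fun i (f : {ffun E -> T}) => [ffun e =>
               \big[hjoin A / hbot A]_(e' : E | sim i e' e) hdia A i (f e')];
     hbox := fun i (f : {ffun E -> T}) => [ffun e =>
               \big[hmeet A / htop A]_(e' : E | sim i e' e) hbox A i (f e')] |}.

Definition mu_prime (mu : Ag -> T -> R) (i : Ag) (f : {ffun E -> T}) : R :=
  \sum_(e : E) \sum_(k < size Phi)
     P i e * mu_loc (mu i) (phi k) (f e) * pre k e.

End EventStructure.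

(* Main.v *)
Require Import Defs.
From HB Require Import structures.
From mathcomp Require Import all_boot all_order all_algebra.
From mathcomp Require Import reals.
From mathcomp Require Import lra ring.

Set Implicit Arguments.
Unset Strict Implicit.
Unset Printing Implicit Defensive.
Import Order.TTheory GRing.Theory Num.Theory.

Section Lat.
Variables (Ag : Type) (T : finType) (A : HAops Ag T).
Hypothesis HH : is_heyting A.
Local Notation le := (hle A).
Local Notation meet := (hmeet A).
Local Notation join := (hjoin A).
Local Notation imp := (himp A).
Local Notation bot := (hbot A).
Local Notation top := (htop A).
Ltac dh := move: HH; rewrite /is_heyting.

Ltac dd := dh; move=> [r [an [tr [ml [mg [jl [jg [bt res]]]]]]]].
Lemma hrefl a : le a a. Proof. by dd. Qed.
Lemma hanti a b : le a b -> le b a -> a = b. Proof. by dd; apply: an. Qed.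
Lemma htrans a b c : le a b -> le b c -> le a c. Proof. by dd; apply: tr. Qed.
Lemma hmeetl a b : le (meet a b) a. Proof. by dd; case: (ml a b). Qed.
Lemma hmeetr a b : le (meet a b) b. Proof. by dd; case: (ml a b). Qed.
Lemma hmeetg a b c : le c a -> le c b -> le c (meet a b). Proof. by dd; apply: mg. Qed.
Lemma hjoinl a b : le a (join a b). Proof. by dd; case: (jl a b). Qed.
Lemma hjoinr a b : le b (join a b). Proof. by dd; case: (jl a b). Qed.
Lemma hjoing a b c : le a c -> le b c -> le (join a b) c. Proof. by dd; apply: jg. Qed.
Lemma hbotle a : le bot a. Proof. by dd; case: (bt a). Qed.
Lemma hletop a : le a top. Proof. by dd; case: (bt a). Qed.
Lemma hres a b c : le (meet c a) b <-> le c (imp a b). Proof. by dd; apply: res. Qed.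

Lemma hmeetC a b : meet a b = meet b a.
Proof. by apply: hanti; apply: hmeetg; rewrite ?hmeetl ?hmeetr. Qed.
Lemma hmeet_mono a a' b b' : le a a' -> le b b' -> le (meet a b) (meet a' b').
Proof. move=> h1 h2; apply: hmeetg; [exact: htrans (hmeetl _ _) h1|exact: htrans (hmeetr _ _) h2]. Qed.
Lemma hjoin_mono a a' b b' : le a a' -> le b b' -> le (join a b) (join a' b').
Proof. move=> h1 h2; apply: hjoing; [exact: htrans h1 (hjoinl _ _)|exact: htrans h2 (hjoinr _ _)]. Qed.
Lemma hmeet0 a : meet a bot = bot.
Proof. by apply: hanti; rewrite ?hbotle ?hmeetr. Qed.
Lemma hmeet0l a : meet bot a = bot.
Proof. by rewrite hmeetC hmeet0. Qed.
Lemma hjoin00 : join bot bot = bot.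
Proof. by apply: hanti; rewrite ?hbotle // hjoing // hrefl. Qed.
Lemma hmeet_id a b : le a b -> meet a b = a.
Proof. by move=> h; apply: hanti; rewrite ?hmeetl // hmeetg // hrefl. Qed.
Lemma hdistr z b c : meet z (join b c) = join (meet z b) (meet z c).
Proof.
apply: hanti; last first.
  by apply: hjoing; apply: hmeet_mono; rewrite ?hrefl ?hjoinl ?hjoinr.
rewrite hmeetC; apply/hres; apply: hjoing; apply/hres; rewrite hmeetC.
  exact: hjoinl. exact: hjoinr.
Qed.

Section Big.
Variables (I : eqType) (r : seq I) (Pr : pred I).

Lemma bj_ub (F : I -> T) j : j \in r -> Pr j -> le (F j) (\big[join/bot]_(i <- r | Pr i) F i).
Proof.
elim: r => // x s IH; rewrite inE big_cons => /orP [/eqP <- -> | js Pj].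
  exact: hjoinl.
case: ifP => _; last exact: IH.
exact: htrans (IH js Pj) (hjoinr _ _).
Qed.

Lemma bj_lub (F : I -> T) c : (forall i, Pr i -> le (F i) c) -> le (\big[join/bot]_(i <- r | Pr i) F i) c.
Proof. by move=> h; apply: (big_rec (fun x => le x c)) => [|i x Pi hx]; [exact: hbotle| exact: hjoing (h _ Pi) hx]. Qed.

Lemma bj_mono (F G : I -> T) : (forall i, Pr i -> le (F i) (G i)) ->
  le (\big[join/bot]_(i <- r | Pr i) F i) (\big[join/bot]_(i <- r | Pr i) G i).
Proof. move=> h; apply: (big_rec2 (fun u v => le u v)); first exact: hrefl. by move=> i x y Pi hx; apply: hjoin_mono => //; apply: h. Qed.

Lemma bm_lb (F : I -> T) j : j \in r -> Pr j -> le (\big[meet/top]_(i <- r | Pr i) F i) (F j).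
Proof.
elim: r => // x s IH; rewrite inE big_cons => /orP [/eqP <- -> | js Pj].
  exact: hmeetl.
case: ifP => _; last exact: IH.
exact: htrans (hmeetr _ _) (IH js Pj).
Qed.

Lemma bm_glb (F : I -> T) c : (forall i, Pr i -> le c (F i)) -> le c (\big[meet/top]_(i <- r | Pr i) F i).
Proof. by move=> h; apply: (big_rec (fun x => le c x)) => [|i x Pi hx]; [exact: hletop| exact: hmeetg (h _ Pi) hx]. Qed.

Lemma bm_mono (F G : I -> T) : (forall i, Pr i -> le (F i) (G i)) ->
  le (\big[meet/top]_(i <- r | Pr i) F i) (\big[meet/top]_(i <- r | Pr i) G i).
Proof. move=> h; apply: (big_rec2 (fun u v => le u v)); first exact: hrefl. by move=> i x y Pi hx; apply: hmeet_mono => //; apply: h. Qed.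

Lemma bj_disj (F : I -> T) b : (forall i, i \in r -> Pr i -> meet b (F i) = bot) ->
  meet b (\big[join/bot]_(i <- r | Pr i) F i) = bot.
Proof.
elim: r => [|x s IH] h; first by rewrite big_nil hmeet0.
rewrite big_cons; case: ifP => Px; last by apply: IH => i iS Pi; apply: h => //; rewrite inE iS orbT.
rewrite hdistr h ?inE ?eqxx // IH ?hjoin00 //.
by move=> i iS Pi; apply: h => //; rewrite inE iS orbT.
Qed.
End Big.

End Lat.
Section Mon.
Variables (Ag : Type) (T : finType) (A : HAops Ag T).
Hypothesis HM : is_monadic A.
Local Notation le := (hle A).
Local Notation meet := (hmeet A).
Local Notation join := (hjoin A).
Local Notation imp := (himp A).
Local Notation bot := (hbot A).
Local Notation top := (htop A).
Local Notation dia := (hdia A).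
Local Notation box := (hbox A).

Lemma HHm : is_heyting A. Proof. by case: HM. Qed.
Variable i : Ag.
Ltac dm := move: HM; rewrite /is_monadic => [[_ /(_ i) [dmo [bmo [din [bde [djo [bim [dbd [dbb [bdi [dbo btp]]]]]]]]]]]].
Lemma dmono a b : le a b -> le (dia i a) (dia i b). Proof. by dm; apply: dmo. Qed.
Lemma bmono a b : le a b -> le (box i a) (box i b). Proof. by dm; apply: bmo. Qed.
Lemma dinc a : le a (dia i a). Proof. by dm; apply: din. Qed.
Lemma bdec a : le (box i a) a. Proof. by dm; apply: bde. Qed.
Lemma djoin a b : le (dia i (join a b)) (join (dia i a) (dia i b)). Proof. by dm; apply: djo. Qed.
Lemma bimpl a b : le (box i (imp a b)) (imp (box i a) (box i b)). Proof. by dm; apply: bim. Qed.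
Lemma dbdl a : le (dia i a) (box i (dia i a)). Proof. by dm; apply: dbd. Qed.
Lemma dbbl a : le (dia i (box i a)) (box i a). Proof. by dm; apply: dbb. Qed.
Lemma bdimp a b : le (box i (imp a b)) (imp (dia i a) (dia i b)). Proof. by dm; apply: bdi. Qed.
Lemma dbot : le (dia i bot) bot. Proof. by dm. Qed.
Lemma btop : le top (box i top). Proof. by dm. Qed.

Let HH := HHm.

Lemma ddia a : dia i (dia i a) = dia i a.
Proof.
apply: (hanti HH); last exact: dinc.
apply: (htrans HH) (dmono (dbdl a)) _.
apply: (htrans HH) (dbbl _) _; exact: bdec.
Qed.

Lemma dboxb a : dia i (box i a) = box i a.
Proof. by apply: (hanti HH); [exact: dbbl| exact: dinc]. Qed.

Lemma bbox a : box i (box i a) = box i a.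
Proof.
apply: (hanti HH); first exact: bdec.
rewrite -{1}dboxb; apply: (htrans HH) (dbdl _) _; rewrite dboxb; exact: hrefl.
Qed.

Lemma bmeet a b : le (meet (box i a) (box i b)) (box i (meet a b)).
Proof.
have h1 : le a (imp b (meet a b)) by apply/(hres HH); exact: hrefl.
have h2 := htrans HH (bmono h1) (bimpl _ _).
apply/(hres HH); exact: h2.
Qed.

Lemma dia_bigjoin (I : Type) (r : seq I) (Pr : pred I) (F : I -> T) :
  le (dia i (\big[join/bot]_(j <- r | Pr j) F j)) (\big[join/bot]_(j <- r | Pr j) dia i (F j)).
Proof.
apply: (big_rec2 (fun u v => le (dia i u) v)); first exact: dbot.
move=> j x y Pj hx; apply: (htrans HH) (djoin _ _) _.
apply: hjoin_mono => //; exact: hrefl.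
Qed.

Lemma box_bigmeet (I : Type) (r : seq I) (Pr : pred I) (F : I -> T) :
  le (\big[meet/top]_(j <- r | Pr j) box i (F j)) (box i (\big[meet/top]_(j <- r | Pr j) F j)).
Proof.
apply: (big_rec2 (fun u v => le u (box i v))); first exact: btop.
move=> j x y Pj hx; apply: (htrans HH) _ (bmeet _ _).
apply: hmeet_mono => //; exact: hrefl.
Qed.

End Mon.
Section Prod.
Variables (Ag : Type) (T : finType) (A : HAops Ag T) (E : finType) (sim : Ag -> rel E).
Hypothesis HM : is_monadic A.
Hypothesis Hsim : forall i, [/\ reflexive (sim i), symmetric (sim i) & transitive (sim i)].
Local Notation le := (hle A).
Local Notation meet := (hmeet A).
Local Notation join := (hjoin A).
Local Notation imp := (himp A).
Local Notation bot := (hbot A).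
Local Notation top := (htop A).
Local Notation dia := (hdia A).
Local Notation box := (hbox A).
Local Notation PA := (prod_ops A sim).
Let HH := HHm HM.

Lemma pleP (f g : {ffun E -> T}) : reflect (forall e, le (f e) (g e)) (hle PA f g).
Proof. exact: forallP. Qed.

Lemma simsame i e e' : sim i e' e -> sim i =2 (fun x y => sim i x y) /\ forall x, sim i x e' = sim i x e.
Proof.
case: (Hsim i) => r s t h; split => // x; apply/idP/idP => hx.
  exact: t hx h.
by apply: t hx _; rewrite s.
Qed.

Lemma class_eq i e e' : sim i e' e -> forall x, sim i x e' = sim i x e.
Proof. by move=> h; case: (simsame h). Qed.

Lemma simrefl i e : sim i e e. Proof. by case: (Hsim i). Qed.

Lemma bj_const i e c : \big[join/bot]_(e' | sim i e' e) c = c.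
Proof.
apply: (hanti HH); first by apply: bj_lub => // *; exact: hrefl.
exact: (bj_ub HH (fun _ => c) (mem_index_enum e) (simrefl i e)).
Qed.

Lemma dfix i (f : {ffun E -> T}) e :
  dia i (\big[join/bot]_(e' | sim i e' e) dia i (f e')) = \big[join/bot]_(e' | sim i e' e) dia i (f e').
Proof.
apply: (hanti HH); last exact: dinc.
apply: (htrans HH) (dia_bigjoin HM _ _ _ _) _.
by apply: bj_mono => // j _; rewrite ddia //; exact: hrefl.
Qed.

Lemma bfix i (f : {ffun E -> T}) e :
  box i (\big[meet/top]_(e' | sim i e' e) box i (f e')) = \big[meet/top]_(e' | sim i e' e) box i (f e').
Proof.
apply: (hanti HH); first exact: bdec.
apply: (htrans HH) _ (box_bigmeet HM _ _ _ _).
by apply: bm_mono => // j _; rewrite bbox //; exact: hrefl.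
Qed.

Lemma prod_heyting : is_heyting PA.
Proof.
split; first by move=> a; apply/pleP => e; exact: hrefl.
split; first by move=> a b /pleP h1 /pleP h2; apply/ffunP => e; apply: (hanti HH).
split; first by move=> a b c /pleP h1 /pleP h2; apply/pleP => e; exact: htrans (h1 e) (h2 e).
split; first by move=> a b; split; apply/pleP => e; rewrite ffunE; [exact: hmeetl|exact: hmeetr].
split; first by move=> a b c /pleP h1 /pleP h2; apply/pleP => e; rewrite ffunE; exact: hmeetg.
split; first by move=> a b; split; apply/pleP => e; rewrite ffunE; [exact: hjoinl|exact: hjoinr].
split; first by move=> a b c /pleP h1 /pleP h2; apply/pleP => e; rewrite ffunE; exact: hjoing.
split; first by move=> a; split; apply/pleP => e; rewrite ffunE; [exact: hbotle|exact: hletop].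
move=> a b c; split => /pleP h; apply/pleP => e; have := h e; rewrite !ffunE.
  by move/(hres HH).
by move/(hres HH).
Qed.

Lemma bjdE i (f : {ffun E -> T}) e e' : sim i e' e ->
  \big[join/bot]_(x | sim i x e') dia i (f x) = \big[join/bot]_(x | sim i x e) dia i (f x).
Proof. by move=> h; apply: eq_bigl => x; rewrite (class_eq h). Qed.

Lemma bmbE i (f : {ffun E -> T}) e e' : sim i e' e ->
  \big[meet/top]_(x | sim i x e') box i (f x) = \big[meet/top]_(x | sim i x e) box i (f x).
Proof. by move=> h; apply: eq_bigl => x; rewrite (class_eq h). Qed.

Lemma ub_e i (F : E -> T) e : le (F e) (\big[join/bot]_(x | sim i x e) F x).
Proof. exact: (bj_ub HH F (mem_index_enum e) (simrefl i e)). Qed.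

Lemma lb_e i (F : E -> T) e e' : sim i e' e -> le (\big[meet/top]_(x | sim i x e) F x) (F e').
Proof. exact: (bm_lb HH F (mem_index_enum e')). Qed.

Lemma ub_e' i (F : E -> T) e e' : sim i e' e -> le (F e') (\big[join/bot]_(x | sim i x e) F x).
Proof. exact: (bj_ub HH F (mem_index_enum e')). Qed.

Lemma prod_monadic : is_monadic PA.
Proof.
split; first exact: prod_heyting.
move=> i.
split.
  move=> a b /pleP h; apply/pleP => e; rewrite !ffunE; apply: bj_mono => // j _; exact: dmono.
split.
  move=> a b /pleP h; apply/pleP => e; rewrite !ffunE; apply: bm_mono => // j _; exact: bmono.
split.
  move=> a; apply/pleP => e; rewrite !ffunE; apply: (htrans HH) (ub_e i (fun x => dia i (a x)) e); exact: dinc.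
split.
  move=> a; apply/pleP => e; rewrite !ffunE; apply: (htrans HH) (lb_e (fun x => box i (a x)) (simrefl i e)) _; exact: bdec.
split.
  move=> a b; apply/pleP => e; rewrite !ffunE; apply: bj_lub => // j hj; rewrite ffunE.
  apply: (htrans HH) (djoin HM _ _ _) _.
  apply: hjoin_mono => //; exact: (ub_e' (fun x => dia i (_ x)) hj).
split.
  move=> a b; apply/pleP => e; rewrite !ffunE; apply/(hres HH); apply: bm_glb => // j hj.
  apply: (htrans HH) (hmeet_mono HH (lb_e (fun x => box i (himp PA a b x)) hj) (lb_e (fun x => box i (a x)) hj)) _.
  rewrite ffunE; apply/(hres HH); exact: bimpl.
split.
  move=> a; apply/pleP => e; rewrite !ffunE; apply: bm_glb => // j hj; rewrite ffunE (bjdE _ hj).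
  have := dbdl HM i (\big[join/bot]_(x | sim i x e) dia i (a x)); by rewrite dfix.
split.
  move=> a; apply/pleP => e; rewrite !ffunE; apply: bj_lub => // j hj; rewrite ffunE (bmbE _ hj).
  have := dbbl HM i (\big[meet/top]_(x | sim i x e) box i (a x)); by rewrite bfix.
split.
  move=> a b; apply/pleP => e; rewrite !ffunE; apply/(hres HH).
  rewrite hmeetC //; apply/(hres HH); apply: bj_lub => // j hj; apply/(hres HH); rewrite hmeetC //.
  apply: (htrans HH) (hmeet_mono HH (lb_e (fun x => box i (himp PA a b x)) hj) (hrefl HH _)) _.
  rewrite ffunE; apply: (htrans HH) _ (ub_e' (fun x => dia i (b x)) hj).
  apply/(hres HH); exact: bdimp.
split.
  apply/pleP => e; rewrite !ffunE; apply: bj_lub => // j _; rewrite ffunE; exact: dbot.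
apply/pleP => e; rewrite !ffunE; apply: bm_glb => // j _; rewrite ffunE; exact: btop.
Qed.

Lemma prod_epistemic : is_epistemic A -> is_epistemic PA.
Proof.
move=> [_ Hep]; split; first exact: prod_monadic.
move=> i a; apply/ffunP => e; rewrite !ffunE.
set X := \big[join/bot]_(x | sim i x e) dia i (a x).
have hX : dia i X = X by rewrite /X dfix.
rewrite -hX; exact: Hep.
Qed.

Lemma min_pt i (f : {ffun E -> T}) e : iminimal PA i f -> f e <> bot -> iminimal A i (f e).
Proof.
case=> nb fx mn hne.
have fe : forall e', f e' = \big[join/bot]_(x | sim i x e') dia i (f x).
  by move=> e'; have := congr1 (fun g : {ffun E -> T} => g e') fx; rewrite /= ffunE => <-.
split => //; first by rewrite fe dfix -fe.
move=> b /andP [hbe hbne] db.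
set g : {ffun E -> T} := [ffun x => if sim i x e then b else f x].
have : g = hbot PA.
  apply: mn.
    apply/andP; split.
      apply/pleP => x; rewrite ffunE; case: ifP => h; last exact: hrefl.
      by rewrite (fe x) (bjdE _ h) -(fe e).
    apply/eqP => /(congr1 (fun g : {ffun E -> T} => g e)); rewrite ffunE simrefl => hb.
    by move: hbne; rewrite hb eqxx.
  apply/ffunP => x; rewrite !ffunE; case: (boolP (sim i x e)) => h.
    rewrite (eq_bigr (fun _ => dia i b)); first by rewrite bj_const.
    by move=> y hy; rewrite ffunE -(class_eq h y) hy.
  rewrite (eq_bigr (fun y => dia i (f y))); first by rewrite -fe.
  move=> y hy; rewrite ffunE; case: ifP => // hye.
  case: (Hsim i) => _ s t.
  have hxy : sim i x y by rewrite s.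
  by move: h; rewrite (t _ _ _ hxy hye).
by move/(congr1 (fun g : {ffun E -> T} => g e)); rewrite !ffunE simrefl.
Qed.

Lemma min_ex i (f : {ffun E -> T}) : iminimal PA i f -> exists m, iminimal A i m.
Proof.
move=> mf; case: (pickP (fun e => f e != bot)) => [e /eqP he|h].
  by exists (f e); apply: min_pt.
case: mf => nb _ _; exfalso; apply: nb; apply/ffunP => e; rewrite ffunE.
by move/negbFE/eqP: (h e).
Qed.

Lemma min_dom i (f : {ffun E -> T}) e : iminimal PA i f -> in_dom A i (f e).
Proof.
move=> mf; case: (eqVneq (f e) bot) => [->|/eqP h].
  by case: (min_ex mf) => m hm; exists m; split => //; exact: hbotle.
by exists (f e); split; [exact: min_pt | exact: hrefl].
Qed.

Lemma dom_pt i (x : {ffun E -> T}) e : in_dom PA i x -> in_dom A i (x e).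
Proof.
case=> f [mf /pleP lxf]; case: (min_dom e mf) => m [mm h].
by exists m; split => //; exact: htrans (lxf e) h.
Qed.

End Prod.

Section Meas.
Variables (R : realType) (Ag : Type) (T : finType) (A : HAops Ag T) (i : Ag) (mu : T -> R) (Phi : seq T).
Hypothesis HH : is_heyting A.
Hypothesis Hpm : is_premeasure A i mu.
Hypothesis Hdisj : forall b b' a, b \in Phi -> b' \in Phi -> maxbelow A Phi b a -> maxbelow A Phi b' a ->
  b != b' -> hmeet A b b' = hbot A.
Local Notation le := (hle A).
Local Notation meet := (hmeet A).
Local Notation join := (hjoin A).
Local Notation bot := (hbot A).
Local Open Scope ring_scope.

Lemma mu0 m : iminimal A i m -> mu bot = 0.
Proof. by case: Hpm => _ _ _ h mm; apply: h; exists m; exists m; split => //; exact: hrefl HH _. Qed.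

Lemma mumod m b c : iminimal A i m -> le b m -> le c m -> mu (join b c) = mu b + mu c - mu (meet b c).
Proof. by case: Hpm => _ _ h _; apply: h. Qed.

Lemma mumono m x y : iminimal A i m -> le y m -> le x y -> mu x <= mu y.
Proof.
move=> mm hy hxy; case: Hpm => _ h _ _.
have dx : in_dom A i x.
  by exists m; split => //; exact: (htrans HH hxy hy).
have dy : in_dom A i y by exists m; split.
exact: (h x y dx dy hxy).
Qed.

Lemma maxb_le b a : maxbelow A Phi b a -> le b a.
Proof. by case/andP => /andP []. Qed.

Definition bsJ a := \big[join/bot]_(b <- undup Phi | maxbelow A Phi b a) b.

Lemma sumJ_gen m a z s : iminimal A i m -> le z m -> uniq s -> {subset s <= Phi} ->
  \sum_(b <- s | maxbelow A Phi b a) mu (meet z b) =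
  mu (meet z (\big[join/bot]_(b <- s | maxbelow A Phi b a) b)).
Proof.
move=> mm zm; elim: s => [|x s IH] /=.
  by move=> _ _; rewrite !big_nil hmeet0 // (mu0 mm).
move=> /andP [xs us] ss; rewrite !big_cons; case: ifP => Px; last first.
  by apply: IH => // y ys; apply: ss; rewrite inE ys orbT.
rewrite IH //; last by move=> y ys; apply: ss; rewrite inE ys orbT.
set J := \big[join/bot]_(b <- s | maxbelow A Phi b a) b.
have dj : meet x J = bot.
  apply: (bj_disj HH) => // j js Pj; apply: (Hdisj (a := a)) => //.
  - by apply: ss; rewrite inE eqxx.
  - by apply: ss; rewrite inE js orbT.
  - by apply/eqP => ex; move: xs; rewrite ex js.
rewrite (hdistr HH) (mumod mm (htrans HH (hmeetl HH _ _) zm) (htrans HH (hmeetl HH _ _) zm)).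
have -> : meet (meet z x) (meet z J) = bot.
  apply: (hanti HH); last exact: hbotle HH _.
  apply: (htrans HH (hmeet_mono HH (hmeetr HH _ _) (hmeetr HH _ _))); rewrite dj; exact: hrefl HH _.
by rewrite (mu0 mm) subr0.
Qed.

Lemma sumJ m a z : iminimal A i m -> le z m ->
  \sum_(b <- undup Phi | maxbelow A Phi b a) mu (meet z b) = mu (meet z (bsJ a)).
Proof. by move=> mm zm; apply: (sumJ_gen a mm zm (undup_uniq Phi)) => y; rewrite mem_undup. Qed.

Lemma bsJ_le a : le (bsJ a) a.
Proof. by apply: (bj_lub HH) => // b; exact: maxb_le. Qed.

Lemma mono_loc m a x y : iminimal A i m -> le x y -> le y m -> mu_loc A Phi mu a x <= mu_loc A Phi mu a y.
Proof.
move=> mm lxy ym; have xm := htrans HH lxy ym.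
rewrite /mu_loc (sumJ a mm xm) (sumJ a mm ym).
set J := bsJ a.
have hJa : le J a := bsJ_le a.
have e1 : meet (meet x a) (meet y J) = meet x J.
  apply: (hanti HH).
    apply: (hmeetg HH); [apply: (htrans HH (hmeetl HH _ _)); exact: hmeetl HH _ _ | apply: (htrans HH (hmeetr HH _ _)); exact: hmeetr HH _ _].
  apply: (hmeetg HH); apply: (hmeet_mono HH) => //; exact: hrefl HH _.
have xam : le (meet x a) m by exact: (htrans HH (hmeetl HH x a) xm).
have yJm : le (meet y J) m by exact: (htrans HH (hmeetl HH y J) ym).
have := mumod mm xam yJm; rewrite e1 => hm.
have : mu (join (meet x a) (meet y J)) <= mu (meet y a).
  apply: (mumono mm); first exact: (htrans HH (hmeetl HH y a) ym).
  by apply: (hjoing HH); apply: (hmeet_mono HH) => //; exact: hrefl HH _.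
rewrite hm => h.
lra.

Qed.

Lemma loc_bot m a : iminimal A i m -> mu_loc A Phi mu a bot = 0.
Proof.
move=> mm; rewrite /mu_loc (hmeet0l HH) (mu0 mm) big1 ?subr0 // => b _.
by rewrite (hmeet0l HH) (mu0 mm).
Qed.

Lemma loc_ge0 m a x : iminimal A i m -> le x m -> 0 <= mu_loc A Phi mu a x.
Proof. by move=> mm xm; rewrite -(loc_bot a mm); exact: (mono_loc a mm (hbotle HH x) xm). Qed.

Lemma mu_meet_mod m b c d : iminimal A i m -> le b m -> le c m ->
  mu (meet (join b c) d) = mu (meet b d) + mu (meet c d) - mu (meet (meet b c) d).
Proof.
move=> mm bm cm.
have -> : meet (join b c) d = join (meet b d) (meet c d).
  by rewrite (hmeetC HH) (hdistr HH) (hmeetC HH d b) (hmeetC HH d c).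
rewrite (mumod mm (htrans HH (hmeetl HH b d) bm) (htrans HH (hmeetl HH c d) cm)).
congr (_ - mu _); apply: (hanti HH).
  apply: (hmeetg HH); last exact: (htrans HH (hmeetl HH _ _) (hmeetr HH b d)).
  apply: (hmeetg HH); [exact: (htrans HH (hmeetl HH _ _) (hmeetl HH b d)) | exact: (htrans HH (hmeetr HH _ _) (hmeetl HH c d))].
apply: (hmeetg HH); apply: (hmeet_mono HH); rewrite ?hmeetl ?hmeetr //; exact: hrefl HH _.
Qed.

Lemma loc_mod m a b c : iminimal A i m -> le b m -> le c m ->
  mu_loc A Phi mu a (join b c) = mu_loc A Phi mu a b + mu_loc A Phi mu a c - mu_loc A Phi mu a (meet b c).
Proof.
move=> mm bm cm; rewrite /mu_loc (mu_meet_mod _ mm bm cm).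
rewrite (eq_bigr (fun d => mu (meet b d) + mu (meet c d) - mu (meet (meet b c) d))); last first.
  by move=> d _; rewrite (mu_meet_mod _ mm bm cm).
rewrite sumrB big_split /=.
lra.
Qed.

Lemma meet_absorb x y c : le c y -> meet (meet x y) c = meet x c.
Proof.
move=> cy; apply: (hanti HH).
  by apply: (hmeet_mono HH); [exact: hmeetl HH x y| exact: hrefl HH c].
apply: (hmeetg HH); last exact: hmeetr HH x c.
apply: (hmeetg HH); first exact: hmeetl HH x c.
exact: (htrans HH (hmeetr HH x c) cy).
Qed.

Lemma loc_meet a x y : le a y -> mu_loc A Phi mu a (meet x y) = mu_loc A Phi mu a x.
Proof.
move=> ay; rewrite /mu_loc meet_absorb //; congr (_ - _).
apply: eq_bigr => b hb; rewrite meet_absorb //.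
exact: (htrans HH (maxb_le hb) ay).
Qed.

End Meas.

Section Main.
Lemma disj_pes (Ag : Type) (T : finType) (A : HAops Ag T) (Phi : seq T) :
  (forall k l : 'I_(size Phi), phi A k != phi A l ->
     [\/ hmeet A (phi A k) (phi A l) = hbot A, hlt A (phi A k) (phi A l) | hlt A (phi A l) (phi A k)]) ->
  forall b b' a, b \in Phi -> b' \in Phi -> maxbelow A Phi b a -> maxbelow A Phi b' a ->
  b != b' -> hmeet A b b' = hbot A.
Proof.
move=> H b b' a bP b'P mb mb' nbb.
have ib : index b Phi < size Phi by rewrite index_mem.
have ib' : index b' Phi < size Phi by rewrite index_mem.
have hk : phi A (Ordinal ib) = b by rewrite /phi /= nth_index.
have hl : phi A (Ordinal ib') = b' by rewrite /phi /= nth_index.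
have := H (Ordinal ib) (Ordinal ib').
rewrite hk hl => /(_ nbb) [] // hlt'.
  move: mb => /andP [_ /hasP []]; exists b' => //; rewrite hlt' /=.
  by case/andP: mb' => ->.
move: mb' => /andP [_ /hasP []]; exists b => //; rewrite hlt' /=.
by case/andP: mb => ->.
Qed.

Local Open Scope ring_scope.

Theorem proposition6' (R : realType) (Ag : Type) (T : finType) (A : HAops Ag T)
    (mu : Ag -> T -> R) (E : finType) (sim : Ag -> rel E) (P : Ag -> E -> R)
    (Phi : seq T) (pre : 'I_(size Phi) -> E -> R) :
  is_APE A mu ->
  is_prob_event_structure A sim P pre ->
  is_ApPE (prod_ops A sim) (mu_prime A P pre mu) /\
  (forall y : {ffun E -> T},
     (forall e : E, hle A (\big[hjoin A / hbot A]_(a <- Phi) a) (y e)) ->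
     forall (i : Ag) (x : {ffun E -> T}),
       in_dom (prod_ops A sim) i x ->
       mu_prime A P pre mu i x
       = mu_prime A P pre mu i (hmeet (prod_ops A sim) x y)).
Proof.
move=> [HE Hmu] [_ [Hsim [HP [_ [Hphi [Hpre _]]]]]].
have HM : is_monadic A by case: HE.
have HH : is_heyting A := HHm HM.
have Hd := disj_pes Hphi.
have P0 : forall i e, 0 <= P i e by move=> i e; case/andP: (HP i e) => /ltW.
split; last first.
  move=> y hy i x dx; rewrite /mu_prime; apply: eq_bigr => e _; apply: eq_bigr => k _.
  rewrite ffunE loc_meet //.
  apply: (htrans HH) (hy e).
  exact: (bj_ub HH (fun a => a) (mem_nth (hbot A) (ltn_ord k))).
split; first exact: prod_epistemic.
move=> i; have [Hpm _ _] := Hmu i.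
split.
- move=> x dx; rewrite /mu_prime; apply: sumr_ge0 => e _; apply: sumr_ge0 => k _.
  case: (dom_pt HM Hsim e dx) => m [mm xm].
  rewrite mulr_ge0 ?Hpre // mulr_ge0 ?P0 //.
  exact: (loc_ge0 HH Hpm Hd _ mm xm).
- move=> x y dx dy /(pleP A sim) lxy; rewrite /mu_prime; apply: ler_sum => e _; apply: ler_sum => k _.
  case: (dom_pt HM Hsim e dy) => m [mm ym].
  rewrite ler_wpM2r ?Hpre // ler_wpM2l ?P0 //.
  exact: (mono_loc HH Hpm Hd _ mm (lxy e) ym).
- move=> f b c mf /(pleP A sim) lbf /(pleP A sim) lcf; rewrite /mu_prime.
  rewrite -big_split -sumrB /=; apply: eq_bigr => e _.
  rewrite -big_split -sumrB /=; apply: eq_bigr => k _.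
  case: (min_dom HM Hsim e mf) => m [mm fm].
  rewrite !ffunE (loc_mod Phi HH Hpm _ mm (htrans HH (lbf e) fm) (htrans HH (lcf e) fm)).
  by ring.
- move=> [x [f [mf _]]]; case: (min_ex HM Hsim mf) => m mm.
  rewrite /mu_prime big1 // => e _; rewrite big1 // => k _.
  by rewrite ffunE (loc_bot Phi HH Hpm _ mm) mulr0 mul0r.
Qed.
End Main.

Unset Implicit Arguments.
Set Strict Implicit.

Theorem proposition6 (R : realType) (Ag : Type) (T : finType) (A : HAops Ag T)
    (mu : Ag -> T -> R) (E : finType) (sim : Ag -> rel E) (P : Ag -> E -> R)
    (Phi : seq T) (pre : 'I_(size Phi) -> E -> R) :
  is_APE A mu ->
  is_prob_event_structure A sim P pre ->
  is_ApPE (prod_ops A sim) (mu_prime A P pre mu) /\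
  (forall y : {ffun E -> T},
     (forall e : E, hle A (\big[hjoin A / hbot A]_(a <- Phi) a) (y e)) ->
     forall (i : Ag) (x : {ffun E -> T}),
       in_dom (prod_ops A sim) i x ->
       mu_prime A P pre mu i x
       = mu_prime A P pre mu i (hmeet (prod_ops A sim) x y)).
Proof. exact: proposition6'. Qed.
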